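(* There is no connected, non-complete, $5$-regular and $1$ net-regular SRSG in $\mathcal C_1\cup\mathcal C_4\cup\mathcal C_5$ with parameters $(n,5,a,b,c)$ satisfying $(a,b)=(2,0)$.
   Context: A signed graph $\dot G=(G,\sigma)$ is a simple graph $G$ with $\sigma:E(G)\to\{\pm1\}$; adjacency matrix $A_{\dot G}$ has entries $\sigma(v_iv_j)$ for adjacent vertices and $0$ otherwise. Degree and connectedness refer to $G$; net-degree is $d^+(v)-d^-(v)$; $\rho$ net-regular means all net-degrees equal $\rho$. $\dot G$ on $n$ vertices is an SRSG if it is neither homogeneous complete nor edgeless and there are $r\in\mathbb N$, $a,b,c\in\mathbb Z$ with $(A^2_{\dot G})_{ii}=r$, $(A^2_{\dot G})_{ij}=a$ for positive edges, $b$ for negative edges, $c$ for distinct non-adjacent pairs; parameters $(n,r,a,b,c)$. Classes: $\mathcal C_1$: $a=-b$ and (complete, or non-complete with $c\neq0$); $\mathcal C_4$: $a\ne-b$, non-complete, $c=0$; $\mathcal C_5$: $a\neq-b$, non-complete, $c\notin\{0,\frac{a+b}{2}\}$. *)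

(* Defs.v *)
From mathcomp Require Import all_boot all_order all_algebra.
Set Implicit Arguments. Unset Strict Implicit. Unset Printing Implicit Defensive.
Import GRing.Theory Num.Theory.
Local Open Scope ring_scope.

(* A signed graph on vertex set 'I_n: an underlying simple graph given by a
   symmetric irreflexive relation [adj], and a signature [sg] (values +-1,
   symmetric, only meaningful on edges). *)
Record signed_graph (n : nat) := SignedGraph {
  adj : rel 'I_n;
  sg  : 'I_n -> 'I_n -> int;
  adj_sym : forall i j, adj i j = adj j i;
  adj_irr : forall i, ~~ adj i i;
  sg_sym : forall i j, sg i j = sg j i;
  sg_pm1 : forall i j, adj i j -> sg i j = 1 \/ sg i j = -1
}.

Section SG.
Variables (n : nat) (G : signed_graph n).

Definition sadj : 'M[int]_n :=
  \matrix_(i, j) (if adj G i j then sg G i j else 0).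

Definition pos_edge i j := adj G i j && (sg G i j == 1).
Definition neg_edge i j := adj G i j && (sg G i j == -1).

Definition sdeg (v : 'I_n) : nat := #|[set j | adj G v j]|.
Definition net_deg (v : 'I_n) : int :=
  (#|[set j | pos_edge v j]|%:Z - #|[set j | neg_edge v j]|%:Z).

Definition sregular (r : nat) := forall v, sdeg v = r.
Definition net_regular (rho : int) := forall v, net_deg v = rho.

Definition sconnected := forall i j, connect (adj G) i j.
Definition scomplete := forall i j, i != j -> adj G i j.
Definition homogeneous :=
  (forall i j, adj G i j -> sg G i j = 1) \/ (forall i j, adj G i j -> sg G i j = -1).
Definition edgeless := forall i j, ~~ adj G i j.

Definition SRSG (r : nat) (a b c : int) :=
  ~ (scomplete /\ homogeneous) /\ ~ edgeless /\
  (forall i, (sadj *m sadj) i i = r%:Z) /\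
  (forall i j, pos_edge i j -> (sadj *m sadj) i j = a) /\
  (forall i j, neg_edge i j -> (sadj *m sadj) i j = b) /\
  (forall i j, i != j -> ~~ adj G i j -> (sadj *m sadj) i j = c).

Definition classC1 (a b c : int) :=
  a = - b /\ (scomplete \/ (~ scomplete /\ c != 0)).
Definition classC4 (a b c : int) :=
  a != - b /\ ~ scomplete /\ c = 0.
(* c \notin {0, (a+b)/2}, the latter written without division *)
Definition classC5 (a b c : int) :=
  a != - b /\ ~ scomplete /\ c != 0 /\ c *+ 2 != a + b.
End SG.

(* Main.v *)
Require Import Defs.
From mathcomp Require Import all_boot all_order all_algebra.
From mathcomp Require Import zify.
Set Implicit Arguments. Unset Strict Implicit. Unset Printing Implicit Defensive.
Import Order.TTheory GRing.Theory Num.Theory.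
Local Open Scope ring_scope.

Section S.
Variables (n : nat) (G : signed_graph n).
Local Notation A := (sadj G).
Definition Bm : 'M[int]_n := \matrix_(i, j) (if adj G i j then 1 else 0).
Definition Jm : 'M[int]_n := const_mx 1.

Lemma A_cases i j : (~~ adj G i j /\ A i j = 0 /\ Bm i j = 0) \/
  (pos_edge G i j /\ A i j = 1 /\ Bm i j = 1) \/
  (neg_edge G i j /\ A i j = -1 /\ Bm i j = 1).
Proof.
rewrite !mxE /pos_edge /neg_edge.
case: (boolP (adj G i j)) => h /=; last by left.
by case: (sg_pm1 h) => ->; [right; left | right; right].
Qed.

Lemma pos_not_neg i j : pos_edge G i j -> ~~ neg_edge G i j.
Proof. by rewrite /pos_edge /neg_edge => /andP [-> /eqP ->]. Qed.

Lemma Asym i j : A i j = A j i.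
Proof. by rewrite !mxE adj_sym sg_sym. Qed.
Lemma Bsym i j : Bm i j = Bm j i.
Proof. by rewrite !mxE adj_sym. Qed.

Lemma split4 i (f : 'I_n -> int) :
  \sum_j f j = f i + \sum_(j | pos_edge G i j) f j + \sum_(j | neg_edge G i j) f j
     + \sum_(j | (j != i) && ~~ adj G i j) f j.
Proof.
rewrite (big_mkcond (pos_edge G i)) (big_mkcond (neg_edge G i)).
rewrite (big_mkcond (fun j => (j != i) && ~~ adj G i j)) /=.
rewrite -!addrA -!big_split /= [LHS](bigD1 i) //=; congr (_ + _).
rewrite [RHS](bigD1 i) //=.
have hii : ~~ adj G i i by exact: adj_irr.
rewrite /pos_edge /neg_edge (negbTE hii) eqxx /= !add0r.
apply: eq_bigr => j hj.
rewrite hj /=.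
case: (A_cases i j) => [[h _]|[[h [_ _]]|[h [_ _]]]].
- by rewrite /pos_edge /neg_edge (negbTE h) /= !add0r.
- by move: h; rewrite /pos_edge /neg_edge => /andP [-> /eqP ->] /=; rewrite !addr0.
- by move: h; rewrite /pos_edge /neg_edge => /andP [-> /eqP ->] /=; rewrite !add0r addr0.
Qed.

Lemma card_int (p : pred 'I_n) : \sum_(j | p j) (1 : int) = (#|[set j | p j]|)%:Z.
Proof. rewrite sumr_const natz; congr Posz; apply: eq_card => x; by rewrite inE. Qed.


Lemma pos_AB i j : pos_edge G i j -> A i j = 1 /\ Bm i j = 1.
Proof.
case: (A_cases i j) => [[h _]|[[_ h]|[h _]]] // hp.
- by move: hp h; rewrite /pos_edge => /andP [->].
- by move: (pos_not_neg hp); rewrite h.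
Qed.
Lemma neg_AB i j : neg_edge G i j -> A i j = -1 /\ Bm i j = 1.
Proof.
case: (A_cases i j) => [[h _]|[[h _]|[_ h]]] // hp.
- by move: hp h; rewrite /neg_edge => /andP [->].
- by move: (pos_not_neg h); rewrite hp.
Qed.
Lemma non_AB i j : ~~ adj G i j -> A i j = 0 /\ Bm i j = 0.
Proof. by move=> h; rewrite !mxE (negbTE h). Qed.
Lemma diag_AB i : A i i = 0 /\ Bm i i = 0.
Proof. by apply: non_AB; apply: adj_irr. Qed.

Definition npos i := (#|[set j | pos_edge G i j]|)%:Z.
Definition nneg i := (#|[set j | neg_edge G i j]|)%:Z.
Definition nnon i := (#|[set j | (j != i) && ~~ adj G i j]|)%:Z.
Lemma nnon_ge0 i : 0 <= nnon i. Proof. by []. Qed.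

Lemma sum_pos i (f : 'I_n -> int) x : (forall j, pos_edge G i j -> f j = x) ->
  \sum_(j | pos_edge G i j) f j = x * npos i.
Proof.
move=> h; rewrite (eq_bigr (fun _ => x * 1)); last by move=> j /h ->; rewrite mulr1.
by rewrite -mulr_sumr card_int.
Qed.
Lemma sum_neg i (f : 'I_n -> int) x : (forall j, neg_edge G i j -> f j = x) ->
  \sum_(j | neg_edge G i j) f j = x * nneg i.
Proof.
move=> h; rewrite (eq_bigr (fun _ => x * 1)); last by move=> j /h ->; rewrite mulr1.
by rewrite -mulr_sumr card_int.
Qed.
Lemma sum_non i (f : 'I_n -> int) x : (forall j, j != i -> ~~ adj G i j -> f j = x) ->
  \sum_(j | (j != i) && ~~ adj G i j) f j = x * nnon i.
Proof.
move=> h; rewrite (eq_bigr (fun _ => x * 1)); last by move=> j /andP [h1 h2]; rewrite (h j h1 h2) mulr1.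
by rewrite -mulr_sumr card_int.
Qed.

Lemma rowA i : \sum_j A i j = npos i - nneg i.
Proof.
rewrite (split4 i) (diag_AB i).1 (sum_pos (x := 1)); last by move=> j /pos_AB [].
rewrite (sum_neg (x := -1)); last by move=> j /neg_AB [].
rewrite (sum_non (x := 0)); last by move=> j _ /non_AB [].
by rewrite add0r mul0r addr0 mul1r mulN1r.
Qed.

Lemma rowB i : \sum_j Bm i j = npos i + nneg i.
Proof.
rewrite (split4 i) (diag_AB i).2 (sum_pos (x := 1)); last by move=> j /pos_AB [].
rewrite (sum_neg (x := 1)); last by move=> j /neg_AB [].
rewrite (sum_non (x := 0)); last by move=> j _ /non_AB [].
by rewrite add0r mul0r addr0 !mul1r.
Qed.

Lemma rowB' i : \sum_j Bm i j = (sdeg G i)%:Z.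
Proof.
rewrite /sdeg -card_int [RHS]big_mkcond /=; apply: eq_bigr => j _; by rewrite mxE.
Qed.

Lemma rowN i : (n%:Z) = 1 + npos i + nneg i + nnon i.
Proof.
have := split4 i (fun _ => 1).
rewrite (sum_pos (x := 1)) // (sum_neg (x := 1)) // (sum_non (x := 1)) // !mul1r => <-.
by rewrite sumr_const card_ord natz.
Qed.

Lemma sum_prod (M N : 'M[int]_n) i : \sum_j (M *m N) i j = \sum_x M i x * \sum_j N x j.
Proof.
under eq_bigr do rewrite mxE.
rewrite exchange_big /=; apply: eq_bigr => x _; by rewrite mulr_sumr.
Qed.

End S.

Section S2.
Variables (n : nat) (G : signed_graph n) (c : int).
Local Notation A := (sadj G).
Local Notation B := (Bm G).
Local Notation J := (Jm n).
Hypothesis hd : forall i, (A *m A) i i = (5%N)%:Z.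
Hypothesis hp : forall i j, pos_edge G i j -> (A *m A) i j = 2.
Hypothesis hn : forall i j, neg_edge G i j -> (A *m A) i j = 0.
Hypothesis hnon : forall i j, i != j -> ~~ adj G i j -> (A *m A) i j = c.
Hypothesis hnet : net_regular G 1.

Lemma rowA1 i : \sum_j A i j = 1.
Proof. by rewrite rowA; have := hnet i. Qed.

Lemma A2 : A *m A = (5 - c)%:M + A + (1 - c) *: B + c *: J.
Proof.
apply/matrixP => i j.
case: (eqVneq i j) => [<-|hij].
  rewrite hd !mxE eqxx (negbTE (adj_irr G i)) /= mulr1n; lia.
case: (boolP (adj G i j)) => ha.
  case: (sg_pm1 ha) => hs.
    rewrite hp; last by rewrite /pos_edge ha hs.
    rewrite !mxE ha hs (negbTE hij) /= mulr0n; lia.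
  rewrite hn; last by rewrite /neg_edge ha hs.
  rewrite !mxE ha hs (negbTE hij) /= mulr0n; lia.
rewrite hnon // !mxE (negbTE ha) (negbTE hij) /= mulr0n; lia.
Qed.

Lemma AJ : A *m J = J.
Proof.
apply/matrixP => i j; rewrite /Jm mxE [X in _ = X]mxE.
under eq_bigr do rewrite [X in _ * X]mxE mulr1.
exact: rowA1.
Qed.

Lemma JA : J *m A = J.
Proof.
apply/matrixP => i j; rewrite /Jm mxE [X in _ = X]mxE.
under eq_bigr do rewrite [X in X * _]mxE mul1r Asym.
exact: rowA1.
Qed.

Lemma commAB : c != 1 -> A *m B = B *m A.
Proof.
move=> hc1.
have := mulmxA A A A; rewrite A2.
rewrite !mulmxDr !mulmxDl mul_mx_scalar mul_scalar_mx -!scalemxAr -!scalemxAl AJ JA.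
rewrite -!addrA => /addrI/addrI/addIr /matrixP h.
apply/matrixP => i j; move: (h i j); rewrite !mxE; apply: mulfI.
by rewrite subr_eq0 eq_sym.
Qed.


Lemma mulE (M N : 'M[int]_n) i j : (M *m N) i j = \sum_k M i k * N k j.
Proof. by rewrite mxE. Qed.

Definition tt_ i j x : int := if (A i x == -1) && (A x j == 1) then 1 else 0.

Lemma term4 i j x : B i x * B x j - A i x * A x j - (A i x * B x j - B i x * A x j)
   = 4 * tt_ i j x.
Proof.
rewrite /tt_.
case: (A_cases G i x) => [[_ [-> ->]]|[[_ [-> ->]]|[_ [-> ->]]]];
case: (A_cases G x j) => [[_ [-> ->]]|[[_ [-> ->]]|[_ [-> ->]]]] //=.
Qed.

Lemma key i j : c != 1 -> exists T : int, 0 <= T /\ (B *m B) i j - (A *m A) i j = 4 * T.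
Proof.
move=> hc1; exists (\sum_x tt_ i j x); split.
  by apply: sumr_ge0 => x _; rewrite /tt_; case: ifP.
have e1 : (A *m B) i j = (B *m A) i j by rewrite commAB.
rewrite mulr_sumr -(eq_bigr _ (fun x _ => term4 i j x)) !sumrB.
by rewrite !mulE in e1 *; rewrite e1 subrr subr0.
Qed.

Lemma kle5 (hreg : sregular G 5) i j : 0 <= (B *m B) i j <= 5.
Proof.
rewrite mulE; apply/andP; split.
  by apply: sumr_ge0 => x _; case: (A_cases G i x) => [[_ [_ ->]]|[[_ [_ ->]]|[_ [_ ->]]]];
  case: (A_cases G x j) => [[_ [_ ->]]|[[_ [_ ->]]|[_ [_ ->]]]].
have -> : (5 : int) = \sum_x B i x by rewrite rowB' hreg.
apply: ler_sum => x _.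
by case: (A_cases G i x) => [[_ [_ ->]]|[[_ [_ ->]]|[_ [_ ->]]]];
  case: (A_cases G x j) => [[_ [_ ->]]|[[_ [_ ->]]|[_ [_ ->]]]].
Qed.

Lemma sle i j : `|(A *m A) i j| <= (B *m B) i j.
Proof.
rewrite !mulE; apply: le_trans (ler_norm_sum _ _ _) _.
apply: ler_sum => x _.
by case: (A_cases G i x) => [[_ [-> ->]]|[[_ [-> ->]]|[_ [-> ->]]]];
  case: (A_cases G x j) => [[_ [-> ->]]|[[_ [-> ->]]|[_ [-> ->]]]].
Qed.

End S2.

Lemma parity (n : nat) (F : 'I_n -> 'I_n -> int) :
  (forall i j, F i j = F j i) -> (forall i, F i i = 0) ->
  exists X, \sum_i \sum_j F i j = 2 * X.
Proof.
move=> hs h0; exists (\sum_(i : 'I_n) \sum_(j : 'I_n | (i < j)%N) F i j).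
have h1 : forall i : 'I_n, \sum_j F i j = \sum_(j : 'I_n | (i < j)%N) F i j + \sum_(j : 'I_n | (j < i)%N) F i j.
  move=> i; rewrite (bigID (fun j : 'I_n => (i < j)%N)) /=; congr (_ + _).
  rewrite [LHS]big_mkcond [RHS]big_mkcond; apply: eq_bigr => j _.
  case: (ltngtP i j) => h //=.
  by have -> : j = i by apply: val_inj. 
rewrite (eq_bigr _ (fun i _ => h1 i)) big_split /=.
have -> : \sum_(i : 'I_n) \sum_(j : 'I_n | (j < i)%N) F i j = \sum_(i : 'I_n) \sum_(j : 'I_n | (i < j)%N) F i j.
  under eq_bigr do rewrite big_mkcond.
  rewrite exchange_big /=; apply: eq_bigr => j _.
  rewrite [RHS]big_mkcond; apply: eq_bigr => i _; by rewrite hs.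
set X := \sum_(i < n) _; first [by rewrite -(mulr_natl X 2) mulr2n | by rewrite mulr2n mulr_natl | lia | by rewrite -mulr2n -mulr_natl].
Qed.

Lemma kdiag_sym (n : nat) (G : signed_graph n) i j : (Bm G *m Bm G) i j = (Bm G *m Bm G) j i.
Proof. rewrite !mulE; apply: eq_bigr => x _; by rewrite mulrC (Bsym G i x) (Bsym G x j). Qed.

Theorem mainTheorem8 (n : nat) (G : signed_graph n) (a b c : int) :
  ~ (sconnected G /\ ~ scomplete G /\ sregular G 5 /\ net_regular G 1 /\
     SRSG G 5 a b c /\
     (classC1 G a b c \/ classC4 G a b c \/ classC5 G a b c) /\
     (a, b) = (2, 0)).
Proof.
move=> [_ [hnc [hreg [hnet [[_ [_ [hd [hp [hn hnon]]]]] [hcls hab]]]]]].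
case: hab => ha hb; subst a b.
have [i0 [j0 [hij0 hna0]]] : exists i j, i != j /\ ~~ adj G i j.
  case/boolP: [exists i, exists j, (i != j) && ~~ adj G i j].
    by move=> /existsP [i /existsP [j /andP [h1 h2]]]; exists i, j.
  move=> hne; exfalso; apply: hnc => i j hij; apply/negPn/negP => h.
  by move/negP: hne; apply; apply/existsP; exists i; apply/existsP; exists j; rewrite hij h.
have hcnt : forall i, npos G i = 3 /\ nneg G i = 2.
  move=> i; have h1 := rowB G i; rewrite rowB' hreg in h1.
  have h2 := hnet i; rewrite /net_deg in h2.
  rewrite /npos /nneg in h1 *; lia.
have hcm : forall i, c * nnon G i = -10.
  move=> i.
  have hrow : \sum_j (sadj G *m sadj G) i j = 1.
    rewrite sum_prod; under eq_bigr do rewrite (rowA1 hnet) mulr1.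
    exact: rowA1.
  move: hrow; rewrite (split4 G i) hd (sum_pos (x := 2)) //; last by move=> j /hp.
  rewrite (sum_neg (x := 0)) //; last by move=> j /hn.
  rewrite (sum_non (x := c)) //; last by move=> j h1 h2; apply: hnon => //; rewrite eq_sym.
  have [h1 h2] := hcnt i; rewrite h1 h2; lia.
have hc1 : c != 1.
  case: hcls => [[h _]|[[_ [_ h]]|[_ [_ [_ h]]]]].
  - by move: h; rewrite oppr0.
  - by have := hcm i0; rewrite h mul0r.
  - by apply: contra h => /eqP ->.
have hks : forall i j, exists T : int, 0 <= T /\ 0 <= (Bm G *m Bm G) i j <= 5 /\
    - (Bm G *m Bm G) i j <= (sadj G *m sadj G) i j <= (Bm G *m Bm G) i j /\
    (Bm G *m Bm G) i j - (sadj G *m sadj G) i j = 4 * T.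
  move=> i j; have [T [hT1 hT2]] := key hd hp hn hnon hnet i j hc1.
  exists T; split => //; split; first exact: kle5.
  by split => //; rewrite -ler_norml; apply: sle.
have hnonk : forall i j, j != i -> ~~ adj G i j -> (Bm G *m Bm G) i j = 3 /\ c = -1 \/
                                                  (Bm G *m Bm G) i j = 2 /\ c = -2.
  move=> i j hji hij; have [T [hT [/andP [k1 k2] [/andP [s1 s2] e]]]] := hks i j.
  rewrite hnon ?(eq_sym i) // in s1 s2 e.
  have := hcm i; move: (nnon G i) (nnon_ge0 G i) => m hm0 hm.
  have hcneg : c < 0.
    rewrite ltNge; apply/negP => hc0; have := mulr_ge0 hc0 hm0; rewrite hm; lia.
  have [hc|[hc|[hc|[hc|hc]]]] : c = -5 \/ c = -4 \/ c = -3 \/ c = -2 \/ c = -1 by lia.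
  1-5: lia.
have hsum25 : forall i, \sum_j (Bm G *m Bm G) i j = 25.
  move=> i; rewrite sum_prod; under eq_bigr do rewrite rowB' hreg.
  by rewrite -mulr_suml rowB' hreg.
have hk0 : forall i j, 0 <= (Bm G *m Bm G) i j.
  by move=> i j; have [T [_ [/andP [h _] _]]] := hks i j.
have hkii : forall i, (Bm G *m Bm G) i i = 5.
  move=> i; have [T [hT [/andP [k1 k2] [/andP [s1 s2] e]]]] := hks i i.
  rewrite hd in s1 s2 e; lia.
have hkpos : forall i j, pos_edge G i j -> (Bm G *m Bm G) i j = 2.
  move=> i j hij; have [T [hT [/andP [k1 k2] [/andP [s1 s2] e]]]] := hks i j.
  rewrite hp // in s1 s2 e; lia.
have hj0i0 : j0 != i0 by rewrite eq_sym.
case: (hnonk i0 j0 hj0i0 hna0) => [[_ hc]|[_ hc]].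
  have := hsum25 i0; rewrite (split4 G i0 ((Bm G *m Bm G) i0)).
  rewrite (sum_non (x := 3)); last first.
    by move=> j h1 h2; case: (hnonk i0 j h1 h2) => [[]|[_ ]] //; rewrite hc.
  have hm : nnon G i0 = 10 by have := hcm i0; rewrite hc; lia.
  have p1 : 0 <= \sum_(j | pos_edge G i0 j) (Bm G *m Bm G) i0 j by apply: sumr_ge0.
  have p2 : 0 <= \sum_(j | neg_edge G i0 j) (Bm G *m Bm G) i0 j by apply: sumr_ge0.
  rewrite hm hkii; move: p1 p2.
  set P := (\sum_(j | pos_edge G i0 j) _); set Q := (\sum_(j | neg_edge G i0 j) _); lia.
have hneg4 : forall i, \sum_(j | neg_edge G i j) (Bm G *m Bm G) i j = 4.
  move=> i; have := hsum25 i; rewrite (split4 G i ((Bm G *m Bm G) i)).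
  rewrite (sum_non (x := 2)); last first.
    by move=> j h1 h2; case: (hnonk i j h1 h2) => [[_ ]|[]] //; rewrite hc.
  rewrite (sum_pos (x := 2)) //; last by move=> j /hkpos.
  have hm : nnon G i = 5 by have := hcm i; rewrite hc; lia.
  have [h1 h2] := hcnt i.
  rewrite hm h1 hkii; move=> hh; move: hh.
  set Q := (\sum_(j | neg_edge G i j) _); lia.
pose F i j : int := if neg_edge G i j && ((Bm G *m Bm G) i j == 4) then 1 else 0.
have hF : forall i, \sum_j F i j = 1.
  move=> i; rewrite (split4 G i).
  have -> : F i i = 0 by rewrite /F /neg_edge (negbTE (adj_irr G i)).
  rewrite (sum_pos (x := 0)); last by move=> j /pos_not_neg h; rewrite /F (negbTE h).
  rewrite (sum_non (x := 0)); last by move=> j _ h; rewrite /F /neg_edge (negbTE h).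
  rewrite !mul0r add0r !addr0.
  have : 4 * \sum_(j | neg_edge G i j) F i j = 4.
    rewrite mulr_sumr -[RHS](hneg4 i); apply: eq_bigr => j hj.
    have [T [hT [/andP [k1 k2] [/andP [s1 s2] e]]]] := hks i j.
    rewrite hn // in s1 s2 e.
    rewrite /F hj /=.
    by have [->|->] : (Bm G *m Bm G) i j = 0 \/ (Bm G *m Bm G) i j = 4 by lia.
  lia.
have [X hX] : exists X, \sum_i \sum_j F i j = 2 * X.
  apply: parity => [i j|i].
  - by rewrite /F kdiag_sym /neg_edge adj_sym sg_sym.
  - by rewrite /F /neg_edge (negbTE (adj_irr G i)).
have hn11 : (n%:Z) = 11.
  have := rowN G i0; have [h1 h2] := hcnt i0; have := hcm i0; rewrite hc h1 h2.
  move: (nnon G i0) => m; lia.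
rewrite (eq_bigr _ (fun i _ => hF i)) sumr_const card_ord natz in hX.
lia.
Qed.
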